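(* Let $n\ge1$. (1) Let $X$ be an interval in $\mathcal{K}$ with at least two elements (with the subspace topology). A map $f:X\to X$ has closed graph if and only if there is an integer $\lambda$ with $2\lambda\in X$ such that $f$ is the constant map with value $2\lambda$. (2) A map $f:\mathcal{K}^n\to\mathcal{K}^n$ has closed graph if and only if there are integers $\lambda_1,\ldots,\lambda_n$ such that $f$ is the constant map with value $(2\lambda_1,\ldots,2\lambda_n)$. (3) A map $f:A(\mathcal{K}^n)\to A(\mathcal{K}^n)$ has closed graph if and only if either there are integers $\lambda_1,\ldots,\lambda_n$ such that $f$ is the constant map with value $(2\lambda_1,\ldots,2\lambda_n)$, or $f$ is the constant map with value $\infty$. In particular (cases $n=1,2$ of (3)), every self-map with closed graph on the Khalimsky circle $A(\mathcal{K})$ or on the Khalimsky sphere $A(\mathcal{K}^2)$ is constant.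
   Context: The Khalimsky line $\mathcal{K}$ is $\mathbb{Z}$ equipped with the topology generated by the basis $\{\{2m-1,2m,2m+1\}:m\in\mathbb{Z}\}\cup\{\{2m+1\}:m\in\mathbb{Z}\}$; $\mathcal{K}^n$ is its $n$-fold product with the product topology. An interval in $\mathcal{K}$ is one of: $\varnothing$, $\mathcal{K}$, $\{x\in\mathbb{Z}:a\le x\le b\}$ for integers $a\le b$, $\{x\in\mathbb{Z}:x\ge a\}$ or $\{x\in\mathbb{Z}:x\le a\}$ for an integer $a$. For a topological space $Y$ and a point $\infty\notin Y$, the one-point (Alexandroff) compactification $A(Y)=Y\cup\{\infty\}$ has topology $\{U: U\text{ open in }Y\}\cup\{U\subseteq A(Y):\infty\in U,\ Y\setminus U\text{ is a compact closed subset of }Y\}$. $A(\mathcal{K})$ is called the Khalimsky circle and $A(\mathcal{K}^2)$ the Khalimsky sphere. A map $f:X\to X$ has closed graph if $G_f=\{(x,f(x)):x\in X\}$ is closed in $X\times X$ (product topology); $f$ is not assumed continuous. *)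

(* Defs.v *)
From Stdlib Require Import ZArith List.
From mathcomp Require Import all_boot.

Set Implicit Arguments.
Unset Strict Implicit.
Unset Printing Implicit Defensive.

Definition pset (T : Type) := T -> Prop.

Record space := Space { carrier :> Type; isopen : pset carrier -> Prop }.

Definition generated (T : Type) (B : pset (pset T)) : pset T -> Prop :=
  fun U => forall x, U x -> exists b, B b /\ b x /\ (forall y, b y -> U y).

Definition isclosed (S : space) (A : pset S) : Prop :=
  isopen (fun x => ~ A x).

Definition khal_basis : pset (pset Z) := fun b =>
  (exists m : Z, b = (fun x => (2*m - 1 <= x <= 2*m + 1)%Z)) \/
  (exists m : Z, b = (fun x => x = (2*m + 1)%Z)).

Definition Khalimsky : space := @Space Z (generated khal_basis).

Definition subspace (S : space) (A : pset S) : space :=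
  @Space {x : S | A x}
    (fun V => exists U, isopen U /\ forall y : {x : S | A x}, V y <-> U (proj1_sig y)).

Arguments subspace : clear implicits.

Definition prod_space (S T : space) : space :=
  @Space (S * T)%type
    (generated (fun b => exists U V, @isopen S U /\ @isopen T V /\
                 b = (fun p : S * T => U p.1 /\ V p.2))).

Definition pow_space (S : space) (n : nat) : space :=
  @Space ('I_n -> S)
    (generated (fun b => exists U : 'I_n -> pset S, (forall i, isopen (U i)) /\
                 b = (fun x : 'I_n -> S => forall i, U i (x i)))).

Definition Kn (n : nat) : space := pow_space Khalimsky n.

Definition compact_set (S : space) (A : pset S) : Prop :=
  forall (I : Type) (V : I -> pset S), (forall i, isopen (V i)) ->
    (forall x, A x -> exists i, V i x) ->
    exists l : list I, forall x, A x -> exists i, In i l /\ V i x.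

(* A(Y) = option Y, with None playing the role of the point at infinity. *)
Definition alexandroff (S : space) : space :=
  @Space (option S)
    (fun U =>
       (~ U None /\ isopen (fun y => U (Some y))) \/
       (U None /\ compact_set (fun y => ~ U (Some y))
              /\ isclosed (fun y => ~ U (Some y)))).

Definition closed_graph (S : space) (f : S -> S) : Prop :=
  @isclosed (prod_space S S) (fun p => p.2 = f p.1).

Definition khal_interval (X : pset Z) : Prop :=
  (forall x, ~ X x) \/
  (forall x, X x) \/
  (exists a b, (a <= b)%Z /\ forall x, X x <-> (a <= x <= b)%Z) \/
  (exists a, forall x, X x <-> (x >= a)%Z) \/
  (exists a, forall x, X x <-> (x <= a)%Z).

(* Main.v *)
Require Import Defs.
From Stdlib Require Import ZArith Lia List Classical FunctionalExtensionality ProofIrrelevance.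
From mathcomp Require Import all_boot.
From mathcomp Require Import zify.

Open Scope Z_scope.

Definition NK (y z : Z) : Prop := (exists m, y = 2*m /\ 2*m-1 <= z <= 2*m+1) \/ z = y.

Lemma NK_refl y : NK y y. Proof. right; reflexivity. Qed.

Lemma NK_trans {y z w} : NK y z -> NK z w -> NK y w.
Proof.
  intros [[m [Hy Hz]]|Hz] [[k [Hk Hw]]|Hw].
  - left; exists m; lia.
  - left; exists m; lia.
  - subst z; left; exists k; lia.
  - right; congruence.
Qed.

Lemma NK_even_target {y l} : NK y (2*l) -> y = 2*l.
Proof. intros [[m [Hy Hz]]|Hz]; lia. Qed.

Lemma K_up {U : pset Z} {y z} : @isopen Khalimsky U -> U y -> NK y z -> U z.
Proof.
  intros HU Hy Hn. destruct (HU y Hy) as [b [Hb [Hby Hbs]]]. apply Hbs.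
  destruct Hb as [[m Hm]|[m Hm]]; subst b; cbv beta in *;
  destruct Hn as [[k [Hk Hz]]| Hz]; try (subst z; exact Hby); lia.
Qed.

Lemma K_open_up (U : pset Z) : (forall y z, U y -> NK y z -> U z) -> @isopen Khalimsky U.
Proof.
  intros H y Hy. destruct (Z.Even_or_Odd y) as [[m Hm]|[m Hm]].
  - exists (fun x => 2*m-1 <= x <= 2*m+1). split; [left; exists m; reflexivity|].
    split; [lia|]. intros z Hz; apply (H y); auto; left; exists m; lia.
  - exists (fun x => x = 2*m+1). split; [right; exists m; reflexivity|].
    split; [lia|]. intros z Hz. subst z. rewrite <- Hm. exact Hy.
Qed.

Definition NKn {n} (y z : 'I_n -> Z) : Prop := forall i, NK (y i) (z i).

Lemma Kn_up n {U : pset ('I_n -> Z)} {y z} : @isopen (Kn n) U -> U y -> NKn y z -> U z.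
Proof.
  intros HU Hy Hn. destruct (HU y Hy) as [b [[Ui [HUi Hb]] [Hby Hbs]]]. subst b.
  apply Hbs. intro i. exact (K_up (HUi i) (Hby i) (Hn i)).
Qed.

Lemma Kn_open_up n (U : pset ('I_n -> Z)) :
  (forall y z, U y -> NKn y z -> U z) -> @isopen (Kn n) U.
Proof.
  intros H y Hy. exists (fun x => forall i, NK (y i) (x i)). split.
  - exists (fun i => NK (y i)). split; [|reflexivity]. intro i. apply K_open_up.
    intros a b Ha Hab. exact (NK_trans Ha Hab).
  - split; [intro i; apply NK_refl|]. intros z Hz. exact (H y z Hy Hz).
Qed.

Lemma NKn_const n (y : 'I_n -> Z) lam : NKn y (fun i => 2 * lam i) -> y = (fun i => 2*lam i).
Proof. intro H. apply functional_extensionality. intro i. exact (NK_even_target (H i)). Qed.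

Lemma cg_sep {S : space} {f : S -> S} : closed_graph f -> forall {x y}, y <> f x ->
  exists U V, isopen U /\ isopen V /\ U x /\ V y /\ (forall x', U x' -> V (f x') -> False).
Proof.
  intros Hc x y Hne. destruct (Hc (x,y) Hne) as [b [[U [V [HU [HV Hb]]]] [Hbp Hbs]]].
  subst b. exists U, V. simpl in Hbp. destruct Hbp. repeat split; auto.
  intros x' Hx' Hv. apply (Hbs (x', f x')); simpl; auto.
Qed.

Lemma cg_NN (S : space) (N : S -> S -> Prop)
  (HN : forall U a b, isopen U -> U a -> N a b -> U b) (f : S -> S) :
  closed_graph f -> (forall x y, N y (f x) -> y = f x) /\ (forall x x', N x x' -> f x' = f x).
Proof.
  intros Hc; split.
  - intros x y Hn. apply NNPP; intro Hne.
    destruct (cg_sep Hc Hne) as (U&V&HU&HV&Hx&Hy&H). exact (H x Hx (HN V y (f x) HV Hy Hn)).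
  - intros x x' Hn. apply NNPP; intro Hne.
    destruct (cg_sep Hc Hne) as (U&V&HU&HV&Hx&Hy&H). exact (H x' (HN U x x' HU Hx Hn) Hy).
Qed.

Lemma cg_const (S : space) (f : S -> S) (c : S) : (forall x, f x = c) ->
  @isopen S (fun _ => True) -> @isopen S (fun y => ~ y = c) -> closed_graph f.
Proof.
  intros Hf Ht Hc. unfold closed_graph, isclosed. simpl. intros p Hp.
  exists (fun q : S*S => (fun _ : S => True) q.1 /\ (fun y => ~ y = c) q.2). split.
  - exists (fun _ => True), (fun y => ~ y = c). auto.
  - split.
    + simpl. split; auto. rewrite <- (Hf p.1). exact Hp.
    + intros q [_ Hq]. simpl. rewrite Hf. exact Hq.
Qed.

Lemma chain n (T : Type) (g : ('I_n -> Z) -> T) :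
  (forall x x', NKn x x' -> g x' = g x) -> forall x y, g x = g y.
Proof.
  intro H.
  have step : forall x x' i, (forall j, j != i -> x' j = x j) -> x' i = x i + 1 -> g x' = g x.
  { intros x x' i Hd Hi. destruct (Z.Even_or_Odd (x i)) as [[m Hm]|[m Hm]].
    - apply H. intro j. case: (eqVneq j i) => [->|Hji].
      + left; exists m; lia.
      + rewrite (Hd j Hji); apply NK_refl.
    - symmetry; apply H. intro j. case: (eqVneq j i) => [->|Hji].
      + left; exists (m+1); lia.
      + rewrite (Hd j Hji); apply NK_refl. }
  have multi : forall (k : nat) x x' i, (forall j, j != i -> x' j = x j) ->
      x' i = x i + Z.of_nat k -> g x' = g x.
  { induction k as [|k IH]; intros x x' i Hd Hi.
    - f_equal. apply functional_extensionality. intro j. case: (eqVneq j i) => [->|Hji].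
      + lia.
      + exact (Hd j Hji).
    - transitivity (g (fun j => if j == i then x i + Z.of_nat k else x j)).
      + apply (step _ _ i).
        * intros j Hj. rewrite (negbTE Hj). exact (Hd j Hj).
        * rewrite eqxx. lia.
      + apply (IH _ _ i).
        * intros j Hj. rewrite (negbTE Hj). reflexivity.
        * rewrite eqxx. lia. }
  have anyc : forall x x' i, (forall j, j != i -> x' j = x j) -> g x' = g x.
  { intros x x' i Hd. destruct (Z_le_gt_dec (x i) (x' i)).
    - apply (multi (Z.to_nat (x' i - x i)) _ _ i Hd). lia.
    - symmetry. apply (multi (Z.to_nat (x i - x' i)) _ _ i).
      + intros j Hj; symmetry; exact (Hd j Hj).
      + lia. }
  have full : forall (k : nat) x y, (forall j : 'I_n, (k <= j)%N -> x j = y j) -> g x = g y.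
  { induction k as [|k IH]; intros x y Hd.
    - f_equal. apply functional_extensionality. intro j. apply Hd. done.
    - case: (ltnP k n) => Hk.
      + pose i := Ordinal Hk.
        transitivity (g (fun j => if j == i then y j else x j)).
        * symmetry. apply (anyc _ _ i). intros j Hj. rewrite (negbTE Hj). reflexivity.
        * apply IH. intros j Hkj. case: (eqVneq j i) => [->|Hji]; [reflexivity|].
          apply Hd. have Hne : (nat_of_ord j) <> k.
          { intro E. move/eqP: Hji; apply. apply: val_inj. exact E. }
          lia.
      + apply IH. intros j Hj. have := ltn_ord j. lia. }
  intros x y. apply (full n). intros j Hj. have := ltn_ord j. lia.
Qed.

Lemma even_of n (v : 'I_n -> Z) : (forall y, NKn y v -> y = v) -> forall i, exists m, v i = 2*m.
Proof.
  intros H i. destruct (Z.Even_or_Odd (v i)) as [[m Hm]|[m Hm]]; [exists m; exact Hm|].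
  exfalso.
  have E := H (fun j => if j == i then v i + 1 else v j).
  have : NKn (fun j => if j == i then v i + 1 else v j) v.
  { intro j. case: (eqVneq j i) => [->|Hji].
    - left. exists (m+1). lia.
    - apply NK_refl. }
  move=> /E E'. have := f_equal (fun h => h i) E'. cbv beta. rewrite eqxx. lia.
Qed.

Lemma half_eq n (v : 'I_n -> Z) : (forall i, exists m, v i = 2*m) -> v = (fun i => 2 * (v i / 2)).
Proof.
  intro H. apply functional_extensionality. intro i. destruct (H i) as [m Hm]. rewrite Hm.
  rewrite (Z.mul_comm 2 m) Z.div_mul; lia.
Qed.

Theorem part2 n : forall f : Kn n -> Kn n,
     closed_graph f <->
     exists lam : 'I_n -> Z, forall x, f x = (fun i => (2 * lam i)%Z).
Proof.
  intro f; split.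
  - intro Hc. destruct (@cg_NN (Kn n) (@NKn n) (fun U a b => @Kn_up n U a b) f Hc) as [HA HB].
    have Hch := @chain n _ f HB.
    pose x0 := (fun _ : 'I_n => 0).
    have Hev := @even_of n _ (HA x0).
    exists (fun i => f x0 i / 2). intro x. rewrite (Hch x x0). exact (@half_eq n _ Hev).
  - intros [lam Hf]. apply (@cg_const (Kn n) f (fun i => 2 * lam i)); [exact Hf| |].
    + apply Kn_open_up. auto.
    + apply Kn_open_up. intros y z Hy Hn Hz. apply Hy. subst z. exact (NKn_const _ _ _ Hn).
Qed.

Definition NA {n} (a b : option ('I_n -> Z)) : Prop :=
  match a, b with Some y, Some z => NKn y z | None, None => True | _, _ => False end.

Lemma A_up n (U : pset (alexandroff (Kn n))) a b :
  isopen U -> U a -> NA a b -> U b.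
Proof.
  destruct a as [y|], b as [z|]; simpl; try tauto.
  intros [[HN HU]|[HN [Hcp Hcl]]] Hy Hn.
  - exact (@Kn_up n (fun y => U (Some y)) y z HU Hy Hn).
  - apply NNPP; intro HnU.
    exact (@Kn_up n (fun y => ~ ~ U (Some y)) y z Hcl (fun H => H Hy) Hn HnU).
Qed.

Lemma list_bound (l : list nat) : exists M, forall m, In m l -> le m M.
Proof.
  induction l as [|a l [M HM]]; simpl.
  - exists O; tauto.
  - exists (Nat.max a M). intros m [->|H]; [lia|]. specialize (HM m H). lia.
Qed.

Lemma A_none n (hn : (0 < n)%N) (U : pset (alexandroff (Kn n))) :
  isopen U -> U None -> exists x, U (Some x).
Proof.
  intros [[HN _]|[_ [Hcp _]]] HU; [contradiction|]. apply NNPP; intro Hno.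
  pose i0 := Ordinal hn.
  destruct (Hcp nat (fun m (z : 'I_n -> Z) => (- 2*Z.of_nat m - 1 <= z i0 <= 2*Z.of_nat m + 1)))
    as [l Hl].
  - intro m. apply Kn_open_up. intros y z Hy Hyz.
    cbv beta in *. destruct (Hyz i0) as [[k [Hk Hz]]|Hz]; lia.
  - intros z _. exists (Z.to_nat (Z.abs (z i0))). cbv beta. lia.
  - destruct (list_bound l) as [M HM].
    destruct (Hl (fun _ => 2 * Z.of_nat M + 3)) as [i [Hi Hv]].
    + intro H. apply Hno. eexists. exact H.
    + specialize (HM i Hi). cbv beta in Hv. lia.
Qed.

Lemma A_top n : @isopen (alexandroff (Kn n)) (fun _ => True).
Proof.
  right. split; [exact I|]. split.
  - intros J V _ _. exists nil. intros x Hx; exfalso; apply Hx; exact I.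
  - unfold isclosed. apply Kn_open_up. intros y z _ _ H. apply H. exact I.
Qed.

Theorem part3 n (hn : (1 <= n)%N) : forall f : alexandroff (Kn n) -> alexandroff (Kn n),
     closed_graph f <->
     ((exists lam : 'I_n -> Z, forall x, f x = Some (fun i => (2 * lam i)%Z)) \/
      (forall x, f x = None)).
Proof.
  intro f; split.
  - intro Hc.
    destruct (@cg_NN (alexandroff (Kn n)) (@NA n) (fun U a b => @A_up n U a b) f Hc) as [HA HB].
    have Hch := @chain n _ (fun x => f (Some x)) (fun x x' H => HB (Some x) (Some x') H).
    pose x0 := (fun _ : 'I_n => 0).
    have Hg : forall x, f (Some x) = f (Some x0) := fun x => Hch x x0.
    destruct (f (Some x0)) as [v|] eqn:E.
    + left.
      have Hev : forall y, NKn y v -> y = v.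
      { intros y Hy. have := HA (Some x0) (Some y). rewrite E. intro H.
        specialize (H Hy). injection H; auto. }
      have Hnone : f None = Some v.
      { apply NNPP; intro Hne.
        have Hne' : Some v <> f None by intro E'; apply Hne; symmetry; exact E'.
        destruct (cg_sep Hc Hne') as (U&V&HU&HV&Hx&Hy&H).
        destruct (@A_none n hn U HU Hx) as [x Hux].
        apply (H _ Hux). rewrite Hg. exact Hy. }
      exists (fun i => v i / 2). have Hv := @half_eq n _ (@even_of n _ Hev).
      intros [x|]; [rewrite Hg|rewrite Hnone]; rewrite {1}Hv; reflexivity.
    + right.
      have Hnone : f None = None.
      { apply NNPP; intro Hne.
        have Hne' : None <> f None by intro E'; apply Hne; symmetry; exact E'.
        destruct (cg_sep Hc Hne') as (U&V&HU&HV&Hx&Hy&H).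
        destruct (@A_none n hn U HU Hx) as [x Hux].
        apply (H _ Hux). rewrite Hg. exact Hy. }
      intros [x|]; [rewrite Hg; reflexivity|exact Hnone].
  - intros [[lam Hf]|Hf].
    + apply (@cg_const (alexandroff (Kn n)) f (Some (fun i => 2 * lam i))); [exact Hf|apply A_top|].
      right. split; [discriminate|]. split.
      * intros J V HV Hcov.
        destruct (Hcov (fun i => 2 * lam i)) as [i Hi]; [intro H; apply H; reflexivity|].
        exists (i :: nil). intros x Hx. exists i. split; [left; reflexivity|].
        have -> : x = (fun i => 2 * lam i); [|exact Hi].
        apply NNPP; intro Hne; apply Hx; intro E; injection E; auto.
      * unfold isclosed. apply Kn_open_up. intros y z Hy Hyz Hz. apply Hz. intro E.
        injection E as E'. subst z. have Ey := NKn_const _ _ _ Hyz. subst y.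
        apply Hy. intro H; apply H; reflexivity.
    + apply (@cg_const (alexandroff (Kn n)) f None); [exact Hf|apply A_top|].
      left. split; [intro H; apply H; reflexivity|].
      apply Kn_open_up. intros y z _ _ H. discriminate H.
Qed.

Ltac nrm := repeat match goal with
  | X : pset Z |- _ =>
     progress change (@proj1_sig (carrier Khalimsky) (fun x : carrier Khalimsky => X x)) with (@proj1_sig Z X) in *
  | X : pset Z |- _ =>
     progress change (@proj1_sig Z (fun x : Z => X x)) with (@proj1_sig Z X) in *
  | X : pset Z |- _ =>
     progress change (@proj1_sig (carrier Khalimsky) X) with (@proj1_sig Z X) in *
  end.

Lemma sub_up (X : pset Z) (U : pset (subspace Khalimsky X)) a b :
  isopen U -> U a -> NK (proj1_sig a) (proj1_sig b) -> U b.
Proof.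
  intros [W [HW HU]] Ha Hn. apply HU. exact (K_up HW (proj1 (HU a) Ha) Hn).
Qed.

Lemma interval_conv {X} : khal_interval X -> forall {p q r}, X p -> X q -> p <= r <= q -> X r.
Proof.
  intros [H|[H|[[a [b [_ H]]]|[[a H]|[a H]]]]] p q r Hp Hq Hr.
  - exfalso; exact (H p Hp).
  - apply H.
  - apply H; apply H in Hp; apply H in Hq; nrm; lia.
  - apply H; apply H in Hp; apply H in Hq; nrm; lia.
  - apply H; apply H in Hp; apply H in Hq; nrm; lia.
Qed.

Lemma sig_ext (X : pset Z) (p q : {x : Z | X x}) : proj1_sig p = proj1_sig q -> p = q.
Proof.
  destruct p as [p Hp], q as [q Hq]; simpl; intro E; subst q.
  f_equal; apply proof_irrelevance.
Qed.

Theorem part1 : forall (X : pset Z), khal_interval X ->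
     (exists a b, X a /\ X b /\ a <> b) ->
     forall f : subspace Khalimsky X -> subspace Khalimsky X,
       closed_graph f <->
       (exists lam : Z, X (2 * lam)%Z /\ forall x, proj1_sig (f x) = (2 * lam)%Z).
Proof.
  intros X HX [a [b [Ha [Hb Hab]]]] f; split.
  - intro Hc.
    destruct (@cg_NN (subspace Khalimsky X) (fun a b => NK (proj1_sig a) (proj1_sig b))
                (fun U a b => @sub_up X U a b) f Hc) as [HA HB].
    have step : forall x x' : {x : Z | X x}, proj1_sig x' = proj1_sig x + 1 -> f x' = f x.
    { intros x x' E. destruct (Z.Even_or_Odd (proj1_sig x)) as [[m Hm]|[m Hm]].
      - apply HB. left; exists m; nrm; lia.
      - symmetry; apply HB. left; exists (m+1); nrm; lia. }
    have multi : forall (k : nat) (x x' : {x : Z | X x}),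
        proj1_sig x' = proj1_sig x + Z.of_nat k -> f x' = f x.
    { induction k as [|k IH]; intros x x' E.
      - f_equal. apply sig_ext. nrm; lia.
      - have Hm : X (proj1_sig x + Z.of_nat k).
        { apply (interval_conv HX (proj2_sig x) (proj2_sig x')). nrm; lia. }
        transitivity (f (exist X _ Hm)).
        + apply step. simpl. nrm; lia.
        + apply IH. simpl. nrm; lia. }
    have anyc : forall x x' : {x : Z | X x}, f x' = f x.
    { intros x x'. destruct (Z_le_gt_dec (proj1_sig x) (proj1_sig x')).
      - apply (multi (Z.to_nat (proj1_sig x' - proj1_sig x))). nrm; lia.
      - symmetry. apply (multi (Z.to_nat (proj1_sig x - proj1_sig x'))). nrm; lia. }
    pose x0 := exist X a Ha.
    pose v := proj1_sig (f x0).
    have Hv : X v := proj2_sig (f x0).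
    have [w [Hw Hwv]] : exists w, X w /\ w <> v.
    { destruct (Z.eq_dec a v) as [E|E].
      - exists b. split; [exact Hb|]. nrm; lia.
      - exists a. auto. }
    destruct (Z.Even_or_Odd v) as [[m Hm]|[m Hm]].
    + exists m. split; [rewrite -Hm; exact Hv|].
      intro x. rewrite (anyc x0 x). exact Hm.
    + exfalso.
      have [u [Hu Hun]] : exists u, X u /\ (u = v - 1 \/ u = v + 1).
      { destruct (Z_le_gt_dec w v).
        - exists (v - 1). split; [|left; reflexivity].
          apply (interval_conv HX Hw Hv). nrm; lia.
        - exists (v + 1). split; [|right; reflexivity].
          apply (interval_conv HX Hv Hw). nrm; lia. }
      have E := HA x0 (exist X u Hu).
      have : exist X u Hu = f x0.
      { apply E. simpl. fold v. destruct Hun as [->| ->]; [left; exists m | left; exists (m+1)]; nrm; lia. }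
      move=> /(f_equal (@proj1_sig _ _)) /= E'. fold v in E'. nrm; lia.
  - intros [lam [Hl Hf]].
    apply (@cg_const (subspace Khalimsky X) f (exist X (2*lam) Hl)).
    + intro x. apply sig_ext. simpl. exact (Hf x).
    + exists (fun _ => True). split; [apply K_open_up; auto|]. intro y; simpl; tauto.
    + exists (fun z => z <> 2*lam). split.
      * apply K_open_up. intros y z Hy Hn Hz. apply Hy. subst z. exact (NK_even_target Hn).
      * intro y; simpl; split.
        -- intros H E; apply H; apply sig_ext; exact E.
        -- intros H E; apply H; rewrite E; reflexivity.
Qed.

Close Scope Z_scope.

Theorem mainTheorem5 (n : nat) (hn : (1 <= n)%N) :
  (* (1) intervals with at least two elements *)
  (forall (X : pset Z), khal_interval X ->
     (exists a b, X a /\ X b /\ a <> b) ->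
     forall f : subspace Khalimsky X -> subspace Khalimsky X,
       closed_graph f <->
       (exists lam : Z, X (2 * lam)%Z /\ forall x, proj1_sig (f x) = (2 * lam)%Z)) /\
  (* (2) K^n *)
  (forall f : Kn n -> Kn n,
     closed_graph f <->
     exists lam : 'I_n -> Z, forall x, f x = (fun i => (2 * lam i)%Z)) /\
  (* (3) A(K^n) *)
  (forall f : alexandroff (Kn n) -> alexandroff (Kn n),
     closed_graph f <->
     ((exists lam : 'I_n -> Z, forall x, f x = Some (fun i => (2 * lam i)%Z)) \/
      (forall x, f x = None))).
Proof.
  split; [exact part1|split; [exact (part2 n)|exact (@part3 n hn)]].
Qed.
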